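(* Let $A,W\in\mathbb R^{d\times d}$ be symmetric positive definite and $c\in\mathbb R^d$; let $\mathcal X=\{x:\|x\|_A\le1\}$, $\Theta=\{\theta:\|\theta-c\|_W\le1\}$. Let $U$ be an orthogonal matrix with $A^{1/2}WA^{1/2}=U\Lambda U^\top$, $\Lambda=\mathrm{diag}(\lambda_1,\dots,\lambda_d)$, and let $b=U^\top A^{-1/2}c$. Let $F(y)=-\sum_{i=1}^d\sqrt{y_i}\,|b_i|-\sqrt{\sum_{i=1}^d\lambda_i^{-1}y_i}$ and consider the problem $P_C$: minimize $F(y)$ over $y\in\Delta_{d-1}$. Given $y\in\Delta_{d-1}$, define $u_i=\sqrt{y_i}\,\mathrm{sign}(b_i)$ for $i\in[d]$, $x=A^{-1/2}Uu$ and $\theta^\star=c+W^{-1}x/\|x\|_{W^{-1}}$. Then $(x,\theta^\star)\in\mathcal X\times\Theta$, and for any $\varepsilon>0$, $y$ is an $\varepsilon$-solution to $P_C$ if and only if $(x,\theta^\star)$ is an $\varepsilon$-solution to $P_B$.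
   Context: $\|z\|_M=\sqrt{z^\top Mz}$. $\Delta_{d-1}=\{y\in\mathbb R^d:y_i\ge0,\sum_iy_i=1\}$. Convention $\mathrm{sign}(0)=1$. $P_B$: maximize $x^\top\theta$ over $(x,\theta)\in\mathcal X\times\Theta$. An $\varepsilon$-solution to $P_B$ is a pair $(x,\theta)\in\mathcal X\times\Theta$ with $x^\top\theta\ge\sup_{\mathcal X\times\Theta}x'^\top\theta'-\varepsilon$; an $\varepsilon$-solution to $P_C$ is $y\in\Delta_{d-1}$ with $F(y)\le\min_{\Delta_{d-1}}F+\varepsilon$. *)

(* Defs.v *)
From mathcomp Require Import all_boot all_order all_algebra.
From mathcomp Require Import all_classical all_reals.
Set Implicit Arguments. Unset Strict Implicit. Unset Printing Implicit Defensive.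
Import Order.TTheory GRing.Theory Num.Theory.
Local Open Scope ring_scope.
Local Open Scope classical_set_scope.

Section Defs.
Variable R : realType.

Definition dotv d (x y : 'cV[R]_d) : R := (x^T *m y) 0 0.

Definition mnorm d (M : 'M[R]_d) (z : 'cV[R]_d) : R := Num.sqrt (dotv z (M *m z)).

Definition sym_posdef d (M : 'M[R]_d) : Prop :=
  M^T = M /\ forall z : 'cV[R]_d, z != 0 -> 0 < dotv z (M *m z).

(* sign with convention sign(0) = 1 *)
Definition sgn (r : R) : R := if 0 <= r then 1 else -1.

Definition simplex d : set 'cV[R]_d :=
  [set y | (forall i, 0 <= y i 0) /\ \sum_i y i 0 = 1].

Definition Xset d (A : 'M[R]_d) : set 'cV[R]_d := [set x | mnorm A x <= 1].
Definition Thset d (W : 'M[R]_d) (c : 'cV[R]_d) : set 'cV[R]_d :=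
  [set th | mnorm W (th - c) <= 1].

Definition Fobj d (lam b : 'cV[R]_d) (y : 'cV[R]_d) : R :=
  - (\sum_i Num.sqrt (y i 0) * `|b i 0|) - Num.sqrt (\sum_i (lam i 0)^-1 * y i 0).

Definition eps_sol_PB d (A W : 'M[R]_d) (c : 'cV[R]_d) (eps : R)
    (x th : 'cV[R]_d) : Prop :=
  x \in Xset A /\ th \in Thset W c /\
  dotv x th >= sup [set dotv x' th' | x' in Xset A & th' in Thset W c] - eps.

Definition eps_sol_PC d (lam b : 'cV[R]_d) (eps : R) (y : 'cV[R]_d) : Prop :=
  y \in @simplex d /\ Fobj lam b y <= inf [set Fobj lam b y' | y' in @simplex d] + eps.

End Defs.

(* Main.v *)
Require Import Defs.
From mathcomp Require Import all_boot all_order all_algebra.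
From mathcomp Require Import all_classical all_reals.
From mathcomp Require Import ring lra.
Import Order.TTheory GRing.Theory Num.Theory.
Local Open Scope ring_scope.
Local Open Scope classical_set_scope.
Section Dot.
Variable R : realType.
Variable d : nat.
Implicit Types (a b e : 'cV[R]_d) (M : 'M[R]_d).

Lemma dotvE a b : dotv a b = \sum_i a i 0 * b i 0.
Proof. by rewrite /dotv mxE; apply: eq_bigr => i _; rewrite mxE. Qed.
Lemma dotvC a b : dotv a b = dotv b a.
Proof. by rewrite !dotvE; apply: eq_bigr => i _; rewrite mulrC. Qed.
Lemma dotvDl a b e : dotv (a + b) e = dotv a e + dotv b e.
Proof. by rewrite !dotvE -big_split; apply: eq_bigr => i _; rewrite mxE mulrDl. Qed.
Lemma dotvDr a b e : dotv e (a + b) = dotv e a + dotv e b.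
Proof. by rewrite dotvC dotvDl !(dotvC e). Qed.
Lemma dotvZl k a b : dotv (k *: a) b = k * dotv a b.
Proof. by rewrite !dotvE mulr_sumr; apply: eq_bigr => i _; rewrite mxE mulrA. Qed.
Lemma dotvZr k a b : dotv a (k *: b) = k * dotv a b.
Proof. by rewrite dotvC dotvZl dotvC. Qed.
Lemma dotvNl a b : dotv (- a) b = - dotv a b.
Proof. by rewrite -scaleN1r dotvZl mulN1r. Qed.
Lemma dotvNr a b : dotv a (- b) = - dotv a b.
Proof. by rewrite dotvC dotvNl dotvC. Qed.
Lemma dotv0l b : dotv 0 b = 0.
Proof. by rewrite dotvE big1 // => i _; rewrite mxE mul0r. Qed.
Lemma dotvMl M a b : dotv (M *m a) b = dotv a (M^T *m b).
Proof. by rewrite /dotv trmx_mul mulmxA. Qed.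
Lemma dotvMr M a b : dotv a (M *m b) = dotv (M^T *m a) b.
Proof. by rewrite dotvMl trmxK. Qed.
Lemma dotvMZ M k a b : dotv a (M *m (k *: b)) = k * dotv a (M *m b).
Proof. by rewrite -scalemxAr dotvZr. Qed.
Lemma dotv_ge0 a : 0 <= dotv a a.
Proof. rewrite dotvE; apply: sumr_ge0 => i _; by rewrite -expr2 sqr_ge0. Qed.

Lemma posdef_ge0 M a : sym_posdef M -> 0 <= dotv a (M *m a).
Proof.
case=> _ H; have [->|/H/ltW //] := eqVneq a 0.
by rewrite dotv0l.
Qed.

Lemma posdef_unit M : sym_posdef M -> M \in unitmx.
Proof.
case=> _ H; rewrite unitmxE unitfE; apply/negP => /det0P [v v0 vM].
have : v^T != 0 by rewrite -(inj_eq (@trmx_inj _ _ _)) trmxK trmx0.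
move/H; rewrite /dotv trmxK mulmxA vM mul0mx mxE ltxx.
by [].
Qed.
End Dot.

Section Main.
Variable R : realType.
Variable d : nat.
Variables (A W Ahalf U : 'M[R]_d) (c lam : 'cV[R]_d).
Hypotheses (HA : sym_posdef A) (HW : sym_posdef W) (HAh : sym_posdef Ahalf)
  (HAA : Ahalf *m Ahalf = A) (HU : U^T *m U = 1%:M)
  (HL : Ahalf *m W *m Ahalf = U *m diag_mx lam^T *m U^T).

Let Ai := invmx Ahalf.
Let Wi := invmx W.
Let b := U^T *m Ai *m c.

Lemma UUt : U *m U^T = 1%:M.
Proof. exact: mulmx1C. Qed.
Lemma AhT : Ahalf^T = Ahalf. Proof. by case: HAh. Qed.
Lemma WT : W^T = W. Proof. by case: HW. Qed.
Lemma AiT : Ai^T = Ai. Proof. by rewrite /Ai trmx_inv AhT. Qed.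
Lemma WiT : Wi^T = Wi. Proof. by rewrite /Wi trmx_inv WT. Qed.
Lemma AhAi : Ahalf *m Ai = 1%:M. Proof. by rewrite mulmxV // posdef_unit. Qed.
Lemma AiAh : Ai *m Ahalf = 1%:M. Proof. by rewrite mulVmx // posdef_unit. Qed.
Lemma WWi : W *m Wi = 1%:M. Proof. by rewrite mulmxV // posdef_unit. Qed.
Lemma WiW : Wi *m W = 1%:M. Proof. by rewrite mulVmx // posdef_unit. Qed.

Lemma quadW v : dotv (Ahalf *m U *m v) (W *m (Ahalf *m U *m v)) = \sum_i lam i 0 * v i 0 ^+ 2.
Proof.
rewrite dotvMl.
have -> : (Ahalf *m U)^T *m (W *m (Ahalf *m U *m v)) = U^T *m (Ahalf *m W *m Ahalf) *m U *m v.
  by rewrite trmx_mul AhT !mulmxA.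
rewrite HL !mulmxA HU mul1mx -(mulmxA (diag_mx _)) HU mulmx1 mul_diag_mx dotvE.
by apply: eq_bigr => i _; rewrite !mxE mulrCA expr2.
Qed.

Lemma lam_pos i : 0 < lam i 0.
Proof.
set v : 'cV[R]_d := delta_mx i 0.
have vnz : Ahalf *m U *m v != 0.
  apply/negP => /eqP H.
  have : (U^T *m Ai) *m (Ahalf *m U *m v) = v.
    by rewrite !mulmxA -(mulmxA _ Ai) AiAh mulmx1 HU mul1mx.
  rewrite H mulmx0 => /matrixP /(_ i 0); rewrite !mxE !eqxx /=.
  by move/eqP; rewrite eq_sym oner_eq0.
case: HW => _ /(_ _ vnz); rewrite quadW (bigD1 i) //= big1 ?addr0.
  by rewrite mxE !eqxx expr1n mulr1.
by move=> j /negbTE ji; rewrite mxE ji /= expr0n mulr0.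
Qed.

Section Key.
Variable v : 'cV[R]_d.
Let x := Ai *m U *m v.

Lemma keyA : dotv x (A *m x) = dotv v v.
Proof.
rewrite /x dotvMl !trmx_mul AiT -HAA !mulmxA -(mulmxA _ Ai Ahalf) AiAh mulmx1.
by rewrite -(mulmxA _ Ahalf Ai) AhAi mulmx1 HU mul1mx.
Qed.

Lemma keyc : dotv x c = dotv v b.
Proof. by rewrite /x dotvMl trmx_mul AiT /b. Qed.

Lemma keyW : dotv x (Wi *m x) = \sum_i (lam i 0)^-1 * v i 0 ^+ 2.
Proof.
set p : 'cV[R]_d := \col_i ((lam i 0)^-1 * v i 0).
have Hp : Wi *m x = Ahalf *m U *m p.
  have E : W *m (Ahalf *m U *m p) = x.
    have : Ahalf *m (W *m (Ahalf *m U *m p)) = U *m v.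
      rewrite !mulmxA HL -(mulmxA _ U^T) -(mulmxA _ (U^T *m U)) HU mul1mx.
      rewrite -mulmxA mul_diag_mx; congr (_ *m _); apply/matrixP => i j.
      rewrite !mxE (ord1 j) mulrA mulfV ?mul1r //; exact/lt0r_neq0/lam_pos.
    move=> /(congr1 (mulmx Ai)); rewrite !mulmxA AiAh mul1mx => H.
    by rewrite H.
  by rewrite -E (mulmxA Wi W) WiW mul1mx.
rewrite Hp dotvMl /x !trmx_mul AiT !mulmxA -(mulmxA _ Ai) AiAh mulmx1 HU mul1mx dotvE.
by apply: eq_bigr => i _; rewrite !mxE mulrCA expr2.
Qed.
End Key.

Lemma xrec (x : 'cV[R]_d) : Ai *m U *m (U^T *m Ahalf *m x) = x.
Proof. by rewrite !mulmxA -(mulmxA _ U) UUt mulmx1 AiAh mul1mx. Qed.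

Lemma quadWi_pos (x : 'cV[R]_d) : x != 0 -> 0 < dotv x (Wi *m x).
Proof.
move=> xnz; set z := Wi *m x.
have xz : x = W *m z by rewrite /z mulmxA WWi mul1mx.
rewrite {1}xz dotvMl WT; case: HW => _; apply.
by apply: contra xnz; rewrite xz => /eqP ->; rewrite mulmx0.
Qed.

Lemma CS (x q : 'cV[R]_d) : dotv q (W *m q) <= 1 -> dotv x q <= Num.sqrt (dotv x (Wi *m x)).
Proof.
move=> Hq; have [->|xnz] := eqVneq x 0; first by rewrite dotv0l sqrtr_ge0.
set n2 := dotv x (Wi *m x); have n2p : 0 < n2 by exact: quadWi_pos.
set n := Num.sqrt n2; have np : 0 < n by rewrite sqrtr_gt0.
have nn : n * n = n2 by rewrite -expr2 sqr_sqrtr // ltW.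
set z := Wi *m x; set p := n^-1 *: z.
have xz : W *m z = x by rewrite /z mulmxA WWi mul1mx.
have H := @posdef_ge0 R d W (p - q) HW.
rewrite mulmxBr dotvDl dotvNl !dotvDr !dotvNr in H.
have E1 : dotv p (W *m p) = 1.
  rewrite /p dotvMZ dotvZl xz dotvC -/n2 -nn.
  by field; rewrite lt0r_neq0.
have E2 : dotv q (W *m p) = n^-1 * dotv x q.
  by rewrite /p dotvMZ xz dotvC.
have E3 : dotv p (W *m q) = n^-1 * dotv x q.
  by rewrite /p dotvZl dotvMr WT xz.
rewrite E1 E2 E3 in H.
have : n^-1 * dotv x q <= 1 by lra.
rewrite ler_pdivrMl // mulr1 //.
Qed.

Definition uof (y' : 'cV[R]_d) : 'cV[R]_d := \col_i (Num.sqrt (y' i 0) * sgn (b i 0)).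
Definition thof (x : 'cV[R]_d) : 'cV[R]_d := c + (mnorm Wi x)^-1 *: (Wi *m x).

Lemma sgn_sqr (r : R) : sgn r * sgn r = 1.
Proof. by rewrite /sgn; case: ifP => _; rewrite ?mulr1 ?mulrNN ?mulr1. Qed.
Lemma sgn_mul (r : R) : sgn r * r = `|r|.
Proof.
rewrite /sgn; case: ifP => h; first by rewrite mul1r ger0_norm.
by rewrite mulN1r ltr0_norm // ltNge h.
Qed.

Lemma realize (y' : 'cV[R]_d) : simplex y' ->
  (mnorm A (Ai *m U *m uof y') <= 1) /\
  (mnorm W (thof (Ai *m U *m uof y') - c) <= 1) /\
  (dotv (Ai *m U *m uof y') (thof (Ai *m U *m uof y')) = - Fobj lam b y').
Proof.
move=> [y0 ys].
set u := uof y'; set x := Ai *m U *m u.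
have uu : dotv u u = 1.
  rewrite dotvE -ys; apply: eq_bigr => i _; rewrite /u /uof !mxE.
  by rewrite mulrACA -expr2 sqr_sqrtr // sgn_sqr mulr1.
have xA : dotv x (A *m x) = 1 by rewrite keyA.
have xnz : x != 0.
  by apply/eqP => x0; move: xA; rewrite x0 dotv0l => /eqP; rewrite eq_sym oner_eq0.
set n2 := dotv x (Wi *m x); have n2p : 0 < n2 by exact: quadWi_pos.
have n2E : n2 = \sum_i (lam i 0)^-1 * y' i 0.
  rewrite /n2 keyW; apply: eq_bigr => i _; rewrite /u /uof !mxE.
  by rewrite exprMn sqr_sqrtr // expr2 sgn_sqr mulr1.
have mn : mnorm Wi x = Num.sqrt n2 by [].
set n := Num.sqrt n2; have np : 0 < n by rewrite sqrtr_gt0.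
have nn : n * n = n2 by rewrite -expr2 sqr_sqrtr // ltW.
set z := Wi *m x.
have xz : W *m z = x by rewrite /z mulmxA WWi mul1mx.
split; first by rewrite /mnorm xA sqrtr1.
split.
  rewrite /thof mn -/n addrC addKr /mnorm dotvMZ dotvZl xz dotvC -/n2 -nn.
  have -> : n^-1 * (n^-1 * (n * n)) = 1 by field; rewrite lt0r_neq0.
  by rewrite sqrtr1.
rewrite /thof mn -/n dotvDr dotvZr -/z -/n2 -nn.
have -> : n^-1 * (n * n) = n by field; rewrite lt0r_neq0.
rewrite keyc /Fobj -n2E -/n opprB opprK addrC; congr (_ + _).
rewrite dotvE; apply: eq_bigr => i _; rewrite /u /uof !mxE -mulrA sgn_mul //.
Qed.

Lemma bound (x' th' : 'cV[R]_d) : (0 < d)%N ->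
  mnorm A x' <= 1 -> mnorm W (th' - c) <= 1 ->
  exists2 y', simplex y' & dotv x' th' <= - Fobj lam b y'.
Proof.
move=> dpos Hx Hth.
set q := th' - c.
have Hq : dotv q (W *m q) <= 1.
  have : Num.sqrt (dotv q (W *m q)) <= Num.sqrt 1 by rewrite sqrtr1.
  by rewrite ler_sqrt.
have thE : th' = c + q by rewrite /q addrC subrK.
pose v := U^T *m Ahalf *m x'.
have xE : x' = Ai *m U *m v by rewrite /v xrec.
set s := dotv v v.
have s1 : s <= 1.
  have : Num.sqrt s <= Num.sqrt 1 by rewrite sqrtr1 /s -keyA -xE.
  by rewrite ler_sqrt.
have dn0 : (d%:R : R) != 0 by rewrite pnatr_eq0 -lt0n.
have k0 : 0 <= (1 - s) / d%:R by rewrite divr_ge0 ?subr_ge0.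
pose y' : 'cV[R]_d := \col_i (v i 0 ^+ 2 + (1 - s) / d%:R).
have y0 : forall i, 0 <= y' i 0 by move=> i; rewrite mxE addr_ge0 ?sqr_ge0.
have yv : forall i, v i 0 ^+ 2 <= y' i 0.
  by move=> i; rewrite /y' [X in _ <= X]mxE lerDl.
exists y'.
  split => //; under eq_bigr do rewrite mxE; rewrite big_split /= sumr_const card_ord -[X in _ + X]mulr_natr divfK //.
  have -> : \sum_i v i 0 ^+ 2 = s by rewrite /s dotvE; apply: eq_bigr => i _; rewrite expr2.
  by rewrite addrC subrK.
apply: le_trans (_ : dotv x' c + Num.sqrt (dotv x' (Wi *m x')) <= _).
  by rewrite thE dotvDr lerD2l CS.
rewrite /Fobj opprB opprK addrC xE keyc keyW lerD //; last first.
  rewrite dotvE; apply: ler_sum => i _.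
  apply: le_trans (ler_norm _) _; rewrite normrM ler_wpM2r //.
  rewrite -sqrtr_sqr ler_sqrt // yv.
rewrite ler_sqrt; last by apply: sumr_ge0 => i _; rewrite mulr_ge0 // invr_ge0 ltW // lam_pos.
apply: ler_sum => i _; rewrite ler_wpM2l ?yv // invr_ge0 ltW // lam_pos //.
Qed.

Lemma simplex_le1 (y' : 'cV[R]_d) i : simplex y' -> y' i 0 <= 1.
Proof.
move=> [y0 ys]; rewrite -ys (bigD1 i) //= lerDl; exact: sumr_ge0.
Qed.

Lemma main_sec (y : 'cV[R]_d) :
  y \in @simplex R d ->
  let b := U^T *m invmx Ahalf *m c in
  let u := \col_i (Num.sqrt (y i 0) * sgn (b i 0)) in
  let x := invmx Ahalf *m U *m u in
  let th := c + (mnorm (invmx W) x)^-1 *: (invmx W *m x) in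
  (x \in Xset A /\ th \in Thset W c) /\
  (forall eps : R, 0 < eps ->
     (eps_sol_PC lam b eps y <-> eps_sol_PB A W c eps x th)).
Proof.
move=> Hy; change (U^T *m invmx Ahalf *m c) with b; move=> b0 u x th.
have Sy : simplex y := set_mem Hy.
have dpos : (0 < d)%N.
  case: Sy => _ H; rewrite lt0n; apply/eqP => d0; move: H.
  rewrite big1 => [/eqP|[i hi] _]; first by rewrite eq_sym oner_eq0.
  by exfalso; move: hi; rewrite d0.
have [X1 [T1 V1]] : mnorm A x <= 1 /\ mnorm W (th - c) <= 1 /\ dotv x th = - Fobj lam b y
  := realize y Sy.
split; first by split; apply: mem_set.
set SB := [set dotv x' th' | x' in Xset A & th' in Thset W c].
set N := [set - z | z in [set Fobj lam b y' | y' in @simplex R d]].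
set B0 := \sum_i `|b i 0| + Num.sqrt (\sum_i (lam i 0)^-1).
have NB : forall e, N e -> e <= B0.
  move=> e [z [y' Sy' <-] <-]; rewrite /Fobj opprB opprK addrC lerD //.
    apply: ler_sum => i _; rewrite -[X in _ <= X]mul1r ler_wpM2r //.
    by rewrite -sqrtr1 ler_sqrt // (simplex_le1 _ _ Sy').
  rewrite ler_sqrt; last by apply: sumr_ge0 => i _; rewrite invr_ge0 ltW // lam_pos.
  apply: ler_sum => i _; rewrite -[X in _ <= X]mulr1 ler_wpM2l ?(simplex_le1 _ _ Sy') //.
  by rewrite invr_ge0 ltW // lam_pos.
have NSB : forall e, N e -> SB e.
  move=> e [z [y' Sy' <-] <-]; have [X2 [T2 V2]] := realize y' Sy'.
  by exists (Ai *m U *m uof y') => //; exists (thof (Ai *m U *m uof y')).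
have SBN : forall e, SB e -> exists2 e', N e' & e <= e'.
  move=> e [x' Hx' [th' Hth' <-]]; have [y' Sy' Hle] := bound x' th' dpos Hx' Hth'.
  by exists (- Fobj lam b y') => //; exists (Fobj lam b y') => //; exists y'.
have Nne : N !=set0 by exists (- Fobj lam b y); exists (Fobj lam b y) => //; exists y.
have Nub : has_ubound N by exists B0 => e /NB.
have SBub : has_ubound SB.
  by exists B0 => e /SBN [e' /NB h1 h2]; exact: le_trans h2 h1.
have supE : sup SB = sup N.
  apply: le_anti; apply/andP; split.
    apply: ge_sup; first by case: Nne => e /NSB; exists e.
    move=> e /SBN [e' Ne' le]; apply: le_trans le _; exact: ub_le_sup.
  apply: ge_sup => // e /NSB; exact: ub_le_sup.
move=> eps _; rewrite /eps_sol_PC /eps_sol_PB /inf -/N -/SB -supE; split.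
  case=> _ H; split; first exact: mem_set.
  split; first exact: mem_set.
  rewrite V1; lra.
by case=> _ [_ H]; split => //; rewrite V1 in H; rewrite /b0; lra.
Qed.

End Main.

Theorem theorem2 (R : realType) (d : nat) (A W : 'M[R]_d) (c : 'cV[R]_d)
    (Ahalf U : 'M[R]_d) (lam : 'cV[R]_d) (y : 'cV[R]_d) :
  sym_posdef A -> sym_posdef W ->
  sym_posdef Ahalf -> Ahalf *m Ahalf = A ->
  U^T *m U = 1%:M ->
  Ahalf *m W *m Ahalf = U *m diag_mx lam^T *m U^T ->
  y \in @simplex R d ->
  let b := U^T *m invmx Ahalf *m c in
  let u := \col_i (Num.sqrt (y i 0) * sgn (b i 0)) in
  let x := invmx Ahalf *m U *m u in
  let th := c + (mnorm (invmx W) x)^-1 *: (invmx W *m x) in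
  (x \in Xset A /\ th \in Thset W c) /\
  (forall eps : R, 0 < eps ->
     (eps_sol_PC lam b eps y <-> eps_sol_PB A W c eps x th)).
Proof.
move=> HA HW HAh HAA HU HL Hy.
by apply: main_sec.
Qed.
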